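(* Let $\{\tau_n\}_{n\ge1}$ be a nonnegative sequence and $\{a_n\}_{n\ge1}$ a non-decreasing strictly positive sequence. Suppose there are finite real constants $\theta\ge1$, $C>0$ and $N\ge2$ such that for all $n\ge N$, $$\frac{a_n^{2\theta}}{n^{\theta-1}}\sum_{k=n}^\infty\frac{k^\theta\tau_k}{a_k^{2\theta}}\le C\sum_{k=1}^{n-1}k\tau_k,$$ and $$\liminf_{n\to\infty}\inf_{k\ge n}\frac{a_k^2}{ka_n^2}\sum_{j=1}^{n-1}j\tau_j>0.$$ Then every random variable $X_1$ satisfying $\sum_{n=1}^\infty n\tau_nP(|X_1|\ge\varepsilon a_n)<\infty$ for all $\varepsilon>0$ also satisfies $\sum_{n=1}^\infty\tau_n e^{-\varepsilon^2a_n^2/(nT_{\varepsilon,n})}<\infty$ for all $\varepsilon>0$, where $T_{\varepsilon,n}=E[X_1^21_{\{|X_1|<\varepsilon a_n\}}]$ and $e^{-t/0}=0$ for $t>0$.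
   Context: ''Positive'' means nonnegative; ''increasing'' means non-decreasing. *)

(* Defs.v *)
From HB Require Import structures.
From mathcomp Require Import all_boot all_order all_algebra.
From mathcomp Require Import all_classical all_reals all_analysis.
Set Implicit Arguments. Unset Strict Implicit. Unset Printing Implicit Defensive.
Import Order.TTheory GRing.Theory Num.Theory.
Local Open Scope ring_scope.

Definition exp_neg_div {R : realType} (t s : R) : R :=
  if s == 0 then 0 else expR (- (t / s)).

(* Main.v *)
Require Import Defs.
From HB Require Import structures.
From mathcomp Require Import all_boot all_order all_algebra.
From mathcomp Require Import all_classical all_reals all_analysis measurable_realfun.
From mathcomp Require Import ring lra.
Import Order.TTheory GRing.Theory Num.Theory.
Local Open Scope ring_scope.


Section helpers.
Variable R : realType.

Lemma young_tangent (th x y : R) : 1 <= th -> 0 <= y -> y <= x ->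
  x `^ th - y `^ th <= th * x `^ (th - 1) * (x - y).
Proof.
move=> th1 y0 yx.
have x0 : 0 <= x by apply: le_trans yx.
have th0 : 0 < th by apply: lt_le_trans th1.
have [->|thn1] := eqVneq th 1.
  by rewrite subrr powRr0 !powRr1 // !mul1r.
have th1' : 1 < th by rewrite lt_neqAle eq_sym thn1.
have th10 : 0 < th - 1 by rewrite subr_gt0.
pose q := th / (th - 1).
have q0 : 0 < q by rewrite divr_gt0.
have pq : th^-1 + q^-1 = 1.
  by rewrite /q invf_div -{1}(div1r th) -mulrDl subrKC mulfV// gt_eqF.
have Y := conjugate_powR y0 (powR_ge0 x (th - 1)) th0 q0 pq.
have e1 : (x `^ (th - 1)) `^ q = x `^ th.
  by rewrite -powRrM /q mulrC divfK // gt_eqF.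
rewrite e1 in Y.
have e2 : x * x `^ (th - 1) = x `^ th by rewrite mulr_powRB1.
have hq : q^-1 = 1 - th^-1 by rewrite -pq addrC addKr.
have Y2 : th * (y * x `^ (th - 1)) <= y `^ th + (th - 1) * x `^ th.
  have : th * (y * x `^ (th - 1)) <= th * (y `^ th / th + x `^ th / q).
    by rewrite ler_pM2l.
  move=> /le_trans; apply.
  rewrite le_eqVlt; apply/orP; left; apply/eqP; rewrite /q.
  by field; rewrite ?gt_eqF.
set Z := x `^ (th - 1) in e2 Y2 *.
set X1 := x `^ th in e2 Y2 *.
set Y1 := y `^ th in Y2 *.
have -> : th * Z * (x - y) = th * (x * Z) - th * (y * Z) by ring.
rewrite e2; set W := y * Z in Y2 *.
rewrite mulrBl mul1r in Y2.
set A := th * X1 in Y2 *; set B := th * W in Y2 *; clearbody A B; lra.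
Qed.

Lemma exp_bound (th y : R) : 0 < th -> 0 < y ->
  expR (- y^-1) <= th `^ th * y `^ th.
Proof.
move=> th0 y0.
have ty0 : 0 < th * y by rewrite mulr_gt0.
rewrite -powRM; [|exact: ltW|exact: ltW].
rewrite /powR gt_eqF // ler_expR.
have ity : 0 < (th * y)^-1 by rewrite invr_gt0.
have := ln_sublinear ity.
rewrite lnV ?posrE // => h.
have : - (th * (th * y)^-1) <= th * ln (th * y).
  rewrite -mulrN ler_pM2l //; rewrite lerNl; exact: ltW.
by rewrite invfM mulrA mulfV ?gt_eqF // mul1r.
Qed.

Lemma sum_mono_nat (f : nat -> R) a M M' : (forall n, (a <= n)%N -> 0 <= f n) ->
  (M <= M')%N -> \sum_(a <= n < M) f n <= \sum_(a <= n < M') f n.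
Proof.
move=> f0 MM.
have [aM|Ma] := leqP a M.
  rewrite (big_cat_nat aM MM) /= lerDl big_nat_cond sumr_ge0 // => i /andP [/andP [Mi _] _].
  apply: f0; exact: leq_trans aM Mi.
rewrite big_geq; last exact: ltnW.
rewrite big_nat_cond sumr_ge0 // => i /andP [/andP [ai _] _]; exact: f0.
Qed.

End helpers.


Section core.
Variable R : realType.

Definition Ssum (tau : nat -> R) n := \sum_(1 <= k < n) k%:R * tau k.

Lemma abel_G (tau G : nat -> R) m M : (1 <= m)%N -> (m < M)%N ->
  \sum_(m.+1 <= j < M) Ssum tau j * (G j.-1 - G j) =
  Ssum tau m.+1 * G m + \sum_(m.+1 <= j < M) j%:R * tau j * G j - Ssum tau M * G M.-1.
Proof.
move=> m1; elim: M => // M IH; rewrite ltnS leq_eqVlt => /orP [/eqP <-| hM].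
  by rewrite !big_geq // addr0 subrr.
rewrite !big_nat_recr //= ?(ltnW hM) // IH //.
have -> : Ssum tau M.+1 = Ssum tau M + M%:R * tau M.
  by rewrite /Ssum big_nat_recr //= (leq_trans m1 (ltnW hM)).
ring.
Qed.

Lemma tel_T (T q : nat -> R) m n : (m <= n)%N ->
  (forall j, (m < j)%N -> T j - T j.-1 <= q j) ->
  T n <= T m + \sum_(m.+1 <= j < n.+1) q j.
Proof.
move=> mn hq; elim: n mn => [|n IH]; first by rewrite leqn0 => /eqP ->; rewrite big_geq // addr0.
rewrite leq_eqVlt => /orP [/eqP <-| hn]; first by rewrite big_geq // addr0.
rewrite big_nat_recr //= addrA.
have := hq n.+1 hn; have := IH hn; rewrite /=; lra.
Qed.

Lemma exch (w u : nat -> R) m M : (m <= M)%N ->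
  \sum_(m <= n < M) w n * \sum_(m.+1 <= j < n.+1) u j =
  \sum_(m.+1 <= j < M) u j * \sum_(j <= n < M) w n.
Proof.
elim: M => [|M IH]; first by rewrite leqn0 => /eqP ->; rewrite !big_geq.
rewrite leq_eqVlt => /orP [/eqP <-| hM].
  by rewrite !big_geq.
have hM' : (m <= M)%N by [].
move: hM'; rewrite leq_eqVlt => /orP [/eqP <-|hmM].
  by rewrite big_nat1 big_geq // mulr0 big_geq.
rewrite big_nat_recr //= IH //.
rewrite (big_nat_recr M m.+1 (fun j => u j * \sum_(j <= n < M.+1) w n)) //= big_nat1.
have -> : \sum_(m.+1 <= i < M) u i * \sum_(i <= n < M.+1) w n =
  \sum_(m.+1 <= i < M) (u i * \sum_(i <= n < M) w n + u i * w M).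
  apply: eq_big_nat => i /andP [_ iM]; rewrite big_nat_recr /= ?mulrDr //; exact: ltnW.
rewrite big_split /= -mulr_suml [\sum_(m.+1 <= j < M.+1) u j]big_nat_recr //=.
ring.
Qed.

End core.
Arguments Ssum {R}.


Section core2.
Variable R : realType.

Lemma exp_neg_div_ge0 (t s : R) : 0 <= exp_neg_div t s.
Proof. by rewrite /exp_neg_div; case: ifP => // _; exact: expR_ge0. Qed.

Lemma exp_neg_div_le1 (t s : R) : 0 <= t -> 0 <= s -> exp_neg_div t s <= 1.
Proof.
move=> t0 s0; rewrite /exp_neg_div; case: ifP => // _.
by rewrite expR_le1 oppr_le0 divr_ge0.
Qed.

Lemma powRV (x r : R) : 0 < x -> (x^-1) `^ r = (x `^ r)^-1.
Proof.
move=> x0.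
have h : (x^-1) `^ r * x `^ r = 1.
  by rewrite -powRM ?invr_ge0 ?ltW // mulVf ?gt_eqF // powR1.
have xr0 : x `^ r != 0 by rewrite gt_eqF // powR_gt0.
by rewrite -[LHS]mulr1 -(mulfV xr0) mulrA h mul1r.
Qed.

Lemma powR2 (x r : R) : 0 <= x -> x `^ (2 * r) = (x ^+ 2) `^ r.
Proof. by move=> x0; rewrite powRrM -powR_mulrn. Qed.

Lemma core (tau a T G : nat -> R) (th C eps c L : R) (m : nat) :
  (1 <= m)%N -> 0 < eps -> 1 <= th -> 0 < c -> 0 <= C ->
  (forall n, (1 <= n)%N -> 0 <= tau n) ->
  (forall n, (1 <= n)%N -> 0 < a n) ->
  (forall n, 0 <= T n) -> (forall n, 0 <= G n) ->
  (forall j, (m < j)%N -> T j - T j.-1 <= (eps * a j) ^+ 2 * (G j.-1 - G j)) ->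
  (forall j, (m < j)%N -> T j.-1 <= T j) ->
  (forall j, (m < j)%N -> G j <= G j.-1) ->
  (forall M, \sum_(1 <= n < M) n%:R * tau n * G n <= L) ->
  (forall n M, (m <= n)%N -> a n `^ (2 * th) / n%:R `^ (th - 1) *
      \sum_(n <= k < M) (k%:R `^ th * tau k / a k `^ (2 * th)) <= C * Ssum tau n) ->
  (forall n k, (m <= n)%N -> (n <= k)%N -> c <= a k ^+ 2 / (k%:R * a n ^+ 2) * Ssum tau n) ->
  exists B, forall M, \sum_(1 <= n < M) tau n * exp_neg_div (eps ^+ 2 * a n ^+ 2) (n%:R * T n) <= B.
Proof.
move=> m1 eps0 th1 c0 C0 tau0 a0 T0 G0 hTG hT hG hL H1 H2.
have th0 : 0 < th by apply: lt_le_trans th1.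
pose S := Ssum tau.
pose b n := eps * a n.
pose w k := k%:R `^ th * tau k / a k `^ (2 * th).
pose q j := G j.-1 - G j.
pose u j := T j `^ (th - 1) * (T j - T j.-1).
have S0 n : 0 <= S n.
  rewrite /S /Ssum big_nat_cond sumr_ge0 // => i /andP [/andP [i1 _] _].
  by rewrite mulr_ge0 // tau0.
have L0 : 0 <= L by have := hL 0%N; rewrite big_geq.
have q0 j : (m < j)%N -> 0 <= q j by move=> mj; rewrite /q subr_ge0 hG.
have b0 n : (1 <= n)%N -> 0 < b n by move=> n1; rewrite mulr_gt0 // a0.
have w0 n : (1 <= n)%N -> 0 <= w n.
  by move=> n1; rewrite /w divr_ge0 ?powR_ge0 // mulr_ge0 ?powR_ge0 // tau0.
have u0 j : (m < j)%N -> 0 <= u j.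
  by move=> mj; rewrite /u mulr_ge0 ?powR_ge0 // subr_ge0 hT.
pose Q := S m.+1 * G m + L.
have hQ M : \sum_(m.+1 <= j < M) S j * q j <= Q.
  have [Mm|mM] := leqP M m.+1.
    by rewrite big_geq // addr_ge0 // mulr_ge0.
  rewrite /Q /S abel_G //; last exact: ltn_trans (ltnSn m) mM.
  have h1 : \sum_(m.+1 <= j < M) j%:R * tau j * G j <= L.
    apply: le_trans (hL M).
    rewrite [X in _ <= X](big_cat_nat (n:=m.+1) _ (ltnW mM)) //= lerDr big_nat_cond sumr_ge0 // => i /andP[/andP[i1 _] _].
    by rewrite mulr_ge0 ?mulr_ge0 ?tau0.
  have h2 : 0 <= Ssum tau M * G M.-1 by rewrite mulr_ge0 // S0.
  lra.
have h2' j n : (m <= j)%N -> (j <= n)%N -> n%:R * b j ^+ 2 <= b n ^+ 2 * S j / c.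
  move=> mj jn.
  have j1 : (1 <= j)%N by exact: leq_trans m1 mj.
  have n1 : (1 <= n)%N by exact: leq_trans j1 jn.
  have H' := H2 j n mj jn.
  rewrite mulrAC ler_pdivlMr in H'; last by rewrite mulr_gt0 ?ltr0n ?exprn_gt0 ?a0.
  rewrite ler_pdivlMr // /b !exprMn.
  have := ler_wpM2l (sqr_ge0 eps) H'.
  rewrite /S; nra.
pose K := (S m * T m / b m ^+ 2 + Q) / c.
have K0 : 0 <= K.
  apply: divr_ge0; last exact: ltW.
  apply: addr_ge0; first by apply: divr_ge0; [apply: mulr_ge0|apply: sqr_ge0].
  by rewrite /Q addr_ge0 ?mulr_ge0.
have hK n : (m <= n)%N -> n%:R * T n <= K * b n ^+ 2.
  move=> mn.
  have n1 : (1 <= n)%N by exact: leq_trans m1 mn.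
  have t := @tel_T _ T (fun j => b j ^+ 2 * q j) m n mn (fun j mj => hTG j mj).
  apply: le_trans (ler_wpM2l (ler0n _ n) t) _.
  rewrite mulrDr mulr_sumr.
  have bm0 : b m ^+ 2 != 0 by rewrite gt_eqF // exprn_gt0 // b0.
  have e1 : n%:R * T m <= b n ^+ 2 * S m / c * (T m / b m ^+ 2).
    have -> : n%:R * T m = n%:R * b m ^+ 2 * (T m / b m ^+ 2).
      by rewrite -mulrA [b m ^+ 2 * _]mulrC divfK.
    by rewrite ler_wpM2r ?divr_ge0 ?sqr_ge0 // h2'.
  have e2 : \sum_(m.+1 <= j < n.+1) n%:R * (b j ^+ 2 * q j) <=
      b n ^+ 2 / c * \sum_(m.+1 <= j < n.+1) S j * q j.
    rewrite mulr_sumr; apply: ler_sum_nat => j /andP[mj jn].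
    rewrite mulrA (_ : b n ^+ 2 / c * (S j * q j) = b n ^+ 2 * S j / c * q j); last by ring.
    by rewrite ler_wpM2r ?q0 // h2' // ltnW.
  have e3 := ler_wpM2l (divr_ge0 (sqr_ge0 (b n)) (ltW c0)) (hQ n.+1).
  apply: le_trans (lerD e1 (le_trans e2 e3)) _.
  rewrite le_eqVlt; apply/orP; left; apply/eqP; rewrite /K; field.
  by rewrite !gt_eqF // b0.
pose Wb j := C * S j * j%:R `^ (th - 1) / a j `^ (2 * th).
have hW j M : (m <= j)%N -> \sum_(j <= n < M) w n <= Wb j.
  move=> mj.
  have j1 : (1 <= j)%N by exact: leq_trans m1 mj.
  have A0 : 0 < a j `^ (2 * th) by rewrite powR_gt0 // a0.
  have J0 : 0 < j%:R `^ (th - 1) by rewrite powR_gt0 // ltr0n.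
  have f0 : 0 < a j `^ (2 * th) / j%:R `^ (th - 1) by rewrite divr_gt0.
  rewrite -(ler_pM2l f0); apply: (le_trans (H1 j M mj)).
  rewrite le_eqVlt; apply/orP; left; apply/eqP; rewrite /Wb /S; field.
  by rewrite !gt_eqF.
pose K' := K `^ (th - 1) * (eps ^+ 2) `^ th * C.
have hu j : (m < j)%N -> u j * Wb j <= K' * (S j * q j).
  move=> mj.
  have jm : (m <= j)%N by exact: ltnW.
  have j1 : (1 <= j)%N by exact: leq_trans m1 jm.
  have j0 : 0 < j%:R :> R by rewrite ltr0n.
  have bj0 : 0 < b j ^+ 2 by rewrite exprn_gt0 // b0.
  have A0 : 0 < a j `^ (2 * th) by rewrite powR_gt0 // a0.
  have J0 : 0 < j%:R `^ (th - 1) by rewrite powR_gt0.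
  have ht : T j <= K * b j ^+ 2 / j%:R by rewrite ler_pdivlMr // mulrC hK.
  have th10 : 0 <= th - 1 by rewrite subr_ge0.
  have hp : T j `^ (th - 1) <= (K * b j ^+ 2 / j%:R) `^ (th - 1).
    apply: (ge0_ler_powR th10); last exact: ht.
      by rewrite nnegrE; exact: T0.
    rewrite nnegrE; apply: divr_ge0; last exact: ltW.
    by apply: mulr_ge0 => //; exact: sqr_ge0.
  have hu1 : u j <= (K * b j ^+ 2 / j%:R) `^ (th - 1) * (b j ^+ 2 * q j).
    by rewrite /u ler_pM ?powR_ge0 ?subr_ge0 ?hT // hTG.
  have Wb0 : 0 <= Wb j by rewrite /Wb divr_ge0 ?mulr_ge0 ?powR_ge0 ?(ltW A0).
  apply: le_trans (ler_wpM2r Wb0 hu1) _.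
  have eP : (K * b j ^+ 2 / j%:R) `^ (th - 1) = K `^ (th - 1) * (b j ^+ 2) `^ (th - 1) / j%:R `^ (th - 1).
    have Kb0 : 0 <= K * b j ^+ 2 by rewrite mulr_ge0 // sqr_ge0.
    have ij0 : 0 <= j%:R^-1 :> R by rewrite invr_ge0 ltW.
    by rewrite (powRM _ Kb0 ij0) (powRM _ K0 (sqr_ge0 _)) powRV.
  have eB : (b j ^+ 2) `^ (th - 1) = (eps ^+ 2) `^ th * a j `^ (2 * th) / b j ^+ 2.
    have e0 : (b j ^+ 2) `^ (th - 1) * b j ^+ 2 = (eps ^+ 2) `^ th * a j `^ (2 * th).
      rewrite mulrC (mulr_powRB1 (ltW bj0) th0).
      by rewrite /b exprMn (powRM _ (sqr_ge0 _) (sqr_ge0 _)) (powR2 _ _ (ltW (a0 j j1))).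
    by rewrite -e0 mulfK // gt_eqF.
  rewrite eP eB /Wb /K'.
  rewrite le_eqVlt; apply/orP; left; apply/eqP; field.
  by rewrite (gt_eqF A0) (gt_eqF J0) (gt_eqF (b0 j j1)).
have hexch M : (m <= M)%N ->
    \sum_(m <= n < M) w n * \sum_(m.+1 <= j < n.+1) u j <= K' * Q.
  move=> mM; rewrite exch //.
  apply: le_trans (_ : \sum_(m.+1 <= j < M) K' * (S j * q j) <= _).
    apply: ler_sum_nat => j /andP[mj _]; apply: le_trans (hu j mj).
    by rewrite ler_wpM2l ?u0 // hW // ltnW.
  rewrite -mulr_sumr ler_wpM2l ?hQ //.
  by rewrite /K' mulr_ge0 ?mulr_ge0 ?powR_ge0.
have hpow n : (m <= n)%N -> T n `^ th <= T m `^ th + th * \sum_(m.+1 <= j < n.+1) u j.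
  move=> mn; rewrite mulr_sumr.
  apply: (@tel_T _ (fun n => T n `^ th) (fun j => th * u j) m n mn) => j mj.
  by rewrite /u mulrA young_tangent ?T0 ?hT.
have hterm n : (1 <= n)%N -> tau n * exp_neg_div (eps ^+ 2 * a n ^+ 2) (n%:R * T n) <=
    th `^ th / (eps ^+ 2) `^ th * (w n * T n `^ th).
  move=> n1.
  have an0 : 0 < a n by rewrite a0.
  have E0 : 0 < (eps ^+ 2) `^ th by rewrite powR_gt0 // exprn_gt0.
  have A0 : 0 < (a n ^+ 2) `^ th by rewrite powR_gt0 // exprn_gt0.
  rewrite /exp_neg_div; case: ifPn => [_|nT0].
    rewrite mulr0; apply: mulr_ge0; first by apply: divr_ge0; exact: powR_ge0.
    by apply: mulr_ge0; [exact: w0|exact: powR_ge0].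
  have nT : 0 < n%:R * T n by rewrite lt0r nT0 mulr_ge0.
  have D0 : 0 < eps ^+ 2 * a n ^+ 2 by rewrite mulr_gt0 ?exprn_gt0.
  pose y := n%:R * T n / (eps ^+ 2 * a n ^+ 2).
  have y0 : 0 < y by rewrite divr_gt0.
  have -> : - (eps ^+ 2 * a n ^+ 2 / (n%:R * T n)) = - y^-1 by rewrite /y invf_div.
  apply: le_trans (ler_wpM2l (tau0 n n1) (@exp_bound _ th y th0 y0)) _.
  have ey : y `^ th = n%:R `^ th * T n `^ th / ((eps ^+ 2) `^ th * (a n ^+ 2) `^ th).
    rewrite /y powRM ?invr_ge0 ?(ltW nT) ?(ltW D0) // powRV //.
    by rewrite powRM ?ler0n ?T0 // powRM ?sqr_ge0.
  rewrite ey /w (powR2 _ _ (ltW an0)).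
  rewrite le_eqVlt; apply/orP; left; apply/eqP; field.
  by rewrite !gt_eqF.
have hmain M : (m <= M)%N ->
    \sum_(m <= n < M) w n * T n `^ th <= T m `^ th * Wb m + th * (K' * Q).
  move=> mM.
  apply: le_trans (_ : \sum_(m <= n < M) w n * (T m `^ th + th * \sum_(m.+1 <= j < n.+1) u j) <= _).
    apply: ler_sum_nat => n /andP[mn _].
    by rewrite ler_wpM2l ?w0 ?hpow // (leq_trans m1 mn).
  have -> : \sum_(m <= n < M) w n * (T m `^ th + th * \sum_(m.+1 <= j < n.+1) u j) =
     T m `^ th * \sum_(m <= n < M) w n + th * \sum_(m <= n < M) w n * \sum_(m.+1 <= j < n.+1) u j.
    rewrite !mulr_sumr -big_split /=; apply: eq_bigr => i _; ring.
  by apply: lerD; rewrite ler_wpM2l ?powR_ge0 ?(ltW th0) ?hW ?hexch.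
exists (\sum_(1 <= n < m) tau n + th `^ th / (eps ^+ 2) `^ th * (T m `^ th * Wb m + th * (K' * Q))).
move=> M.
apply: le_trans (@sum_mono_nat _ _ 1 M (maxn M m) _ (leq_maxl M m)) _.
  by move=> n n1; rewrite mulr_ge0 ?tau0 ?exp_neg_div_ge0.
rewrite (big_cat_nat (n:=m) _ (leq_maxr M m)) //=.
apply: lerD.
  apply: ler_sum_nat => n /andP[n1 _]; rewrite -[X in _ <= X]mulr1 ler_wpM2l ?tau0 //.
  by apply: exp_neg_div_le1; apply: mulr_ge0; rewrite ?sqr_ge0 ?ler0n ?T0.
apply: le_trans (_ : \sum_(m <= n < maxn M m) th `^ th / (eps ^+ 2) `^ th * (w n * T n `^ th) <= _).
  apply: ler_sum_nat => n /andP[mn _]; apply: hterm; exact: leq_trans m1 mn.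
rewrite -mulr_sumr; apply: ler_wpM2l; first by apply: divr_ge0; exact: powR_ge0.
by apply: hmain; exact: leq_maxr.
Qed.

End core2.

Local Open Scope classical_set_scope.
Local Open Scope ring_scope.

Theorem theorem2 (R : realType) (tau a : nat -> R) (theta C : R) (N : nat)
  (tau_ge0 : forall n, (1 <= n)%N -> 0 <= tau n)
  (a_gt0 : forall n, (1 <= n)%N -> 0 < a n)
  (a_nondecr : forall n m, (1 <= n)%N -> (n <= m)%N -> a n <= a m)
  (theta_ge1 : 1 <= theta) (C_gt0 : 0 < C) (N_ge2 : (2 <= N)%N)
  (H1 : forall n, (N <= n)%N ->
     ((a n `^ (2 * theta) / (n%:R `^ (theta - 1)))%:E *
        (\sum_(n <= k <oo) ((k%:R `^ theta * tau k / a k `^ (2 * theta))%:E))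
      <= (C * \sum_(1 <= k < n) (k%:R * tau k))%:E)%E)
  (H2 : (0 < limn_einf (fun n =>
            ereal_inf [set ((a k ^+ 2 / (k%:R * a n ^+ 2)) *
                            \sum_(1 <= j < n) (j%:R * tau j))%:E
                      | k in [set k : nat | (n <= k)%N]]))%E) :
  forall (d : measure_display) (T : measurableType d) (P : probability T R)
         (X : {RV P >-> R}),
    (forall eps : R, 0 < eps ->
       (\sum_(1 <= n <oo) ((n%:R * tau n)%:E * P [set x | (eps * a n <= `|X x|)%R])
          < +oo)%E) ->
    forall eps : R, 0 < eps ->
      (\sum_(1 <= n <oo)
          (tau n * exp_neg_div (eps ^+ 2 * a n ^+ 2)
             (n%:R * fine (\int[P]_(x in [set x | (`|X x| < eps * a n)%R]) ((X x) ^+ 2)%:E)))%:E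
        < +oo)%E.
Proof.
move=> d T P X hX eps eps0.
pose v := fun n => ereal_inf [set ((a k ^+ 2 / (k%:R * a n ^+ 2)) *
                            \sum_(1 <= j < n) (j%:R * tau j))%:E
                      | k in [set k : nat | (n <= k)%N]].
have [c [n0 [c0 hc]]] : exists c : R, exists n0 : nat, 0 < c /\
    forall n k, (n0 <= n)%N -> (n <= k)%N ->
      c <= a k ^+ 2 / (k%:R * a n ^+ 2) * Ssum tau n.
  move: H2; rewrite limn_einf_lim (cvg_lim _ (@cvg_einfs_sup _ v)) // => /ereal_sup_gt [_ [n0 _ <-] hy].
  have [c [c0 hc]] : exists c : R, 0 < c /\ (c%:E <= einfs v n0)%E.
    move: hy; case: (einfs v n0) => [r||] //= hr.
      by exists r; split; rewrite // -lte_fin.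
    by exists 1; split; [exact: ltr01|exact: leey].
  exists c, n0; split => // n k n0n nk.
  have h1 : (einfs v n0 <= v n)%E by apply: ereal_inf_lbound; exists n.
  have h2 : (v n <= ((a k ^+ 2 / (k%:R * a n ^+ 2)) * \sum_(1 <= j < n) (j%:R * tau j))%:E)%E.
    by apply: ereal_inf_lbound; exists k.
  by have := le_trans hc (le_trans h1 h2); rewrite lee_fin.
pose m := maxn N n0.
have m1 : (1 <= m)%N by exact: (leq_trans (ltnW N_ge2) (leq_maxl N n0)).
pose b n := eps * a n.
pose A n := [set x | b n <= `|X x|].
pose D n := [set x | `|X x| < b n].
have mnX : measurable_fun setT (fun x => ((`|X x|)%:E : \bar R)).
  apply/measurable_EFinP; apply: measurableT_comp => //.
have mA n : measurable (A n).
  have := measurable_lee measurableT (measurable_cst ((b n)%:E : \bar R)) mnX.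
  rewrite setTI.
  have -> : A n = [set x | ((b n)%:E <= (`|X x|)%:E)%E] by apply/seteqP; split => x /=; rewrite lee_fin.
  done.
have mD n : measurable (D n).
  have := measurable_lte measurableT mnX (measurable_cst ((b n)%:E : \bar R)).
  rewrite setTI.
  have -> : D n = [set x | ((`|X x|)%:E < (b n)%:E)%E] by apply/seteqP; split => x /=; rewrite lte_fin.
  done.
have mf E : measurable_fun E (fun x => ((X x ^+ 2)%:E : \bar R)).
  apply/measurable_EFinP; apply: measurable_funX; exact: measurable_funP.
pose G n := fine (P (A n)).
have PAE n : P (A n) = (G n)%:E.
  rewrite /G fineK // ge0_fin_numE ?measure_ge0 //.
  by apply: le_lt_trans (probability_le1 P (mA n)) _; exact: ltry.
pose I n := (\int[P]_(x in D n) (X x ^+ 2)%:E)%E.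
have IE n : I n = (fine (I n))%:E.
  rewrite fineK // ge0_fin_numE; last first.
    by apply: integral_ge0 => x _; rewrite lee_fin sqr_ge0.
  apply: le_lt_trans (_ : (_ <= ((b n) ^+ 2)%:E * P (D n))%E) _.
    rewrite -integral_cst //; apply: ge0_le_integral => //.
    - by move=> x _; rewrite lee_fin sqr_ge0.
    - move=> x Dx; have Dx' : `|X x| < b n by exact: Dx.
      rewrite lee_fin -[X x ^+ 2]real_normK ?num_real //.
      have := normr_ge0 (X x); nra.
  have fD : P (D n) \is a fin_num.
    rewrite ge0_fin_numE ?measure_ge0 //.
    by apply: le_lt_trans (probability_le1 P (mD n)) _; exact: ltry.
  by rewrite -(fineK fD) -EFinM ltry.
pose TT n := fine (I n).
have sq_le x n : `|X x| < b n -> X x ^+ 2 <= b n ^+ 2.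
  move=> h; rewrite -[X x ^+ 2]real_normK ?num_real //.
  have := normr_ge0 (X x); nra.
have TT0 n : 0 <= TT n.
  by apply: fine_ge0; apply: integral_ge0 => x _; rewrite lee_fin sqr_ge0.
have G0 n : 0 <= G n by apply: fine_ge0; exact: measure_ge0.
have step i : (1 <= i)%N -> exists r, [/\ TT i.+1 = TT i + r, 0 <= r,
    r <= b i.+1 ^+ 2 * (G i - G i.+1) & G i.+1 <= G i].
  move=> i1.
  have ab : b i <= b i.+1 by rewrite ler_wpM2l ?(ltW eps0) // a_nondecr.
  have sD : D i `<=` D i.+1 by move=> x h; exact: lt_le_trans h ab.
  have sA : A i.+1 `<=` A i by move=> x h; exact: le_trans ab h.
  have eDA : D i.+1 `\` D i = A i `\` A i.+1.
    apply/seteqP; split => x [h1 h2]; split.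
    - by rewrite /A /= leNgt; apply/negP.
    - by move=> h; have := lt_le_trans h1 h; rewrite ltxx.
    - by rewrite /D /= ltNge; apply/negP.
    - by move=> h; have := lt_le_trans h h1; rewrite ltxx.
  have mDD : measurable (D i.+1 `\` D i) by apply: measurableD.
  pose J := (\int[P]_(x in D i.+1 `\` D i) (X x ^+ 2)%:E)%E.
  have hU : I i.+1 = (I i + J)%E.
    rewrite /I /J -{1}(setDUK sD); apply: ge0_integral_setU => //.
    - by move=> x _; rewrite lee_fin sqr_ge0.
    - by rewrite /disj_set setDIK.
  have hPd : P (D i.+1 `\` D i) = (G i - G i.+1)%:E.
    rewrite eDA measureD //; last by apply: (le_lt_trans (probability_le1 P (mA i))); exact: ltry.
    rewrite EFinB (setIidr sA); congr (_ - _)%E; exact: PAE.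
  have Jb : (J <= (b i.+1 ^+ 2 * (G i - G i.+1))%:E)%E.
    rewrite EFinM -hPd -integral_cst //; apply: ge0_le_integral => //.
    - by move=> x _; rewrite lee_fin sqr_ge0.
    - by move=> x [Dx _]; rewrite lee_fin; apply: sq_le; exact: Dx.
  have J0 : (0 <= J)%E by apply: integral_ge0 => x _; rewrite lee_fin sqr_ge0.
  have Jf : J \is a fin_num by rewrite ge0_fin_numE // (le_lt_trans Jb) ?ltry.
  exists (fine J); split.
  - by rewrite /TT hU (IE i) -(fineK Jf) -EFinD /=.
  - exact: fine_ge0.
  - by rewrite -lee_fin fineK.
  - have : (0 <= (G i - G i.+1)%:E)%E by rewrite -hPd; exact: measure_ge0.
    by rewrite lee_fin subr_ge0.
pose Sum := (\sum_(1 <= n <oo) ((n%:R * tau n)%:E * P (A n)))%E.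
have Sum0 : (0 <= Sum)%E.
  apply: nneseries_ge0 => n n1 _; apply: mule_ge0; last exact: measure_ge0.
  by rewrite lee_fin mulr_ge0 ?tau_ge0.
have Sumf : Sum \is a fin_num by rewrite ge0_fin_numE //; exact: hX.
have hTG j : (m < j)%N -> TT j - TT j.-1 <= (eps * a j) ^+ 2 * (G j.-1 - G j).
  case: j => // i mi; have i1 : (1 <= i)%N by exact: leq_trans m1 mi.
  by have [r [-> r0 rb _]] := step i i1; rewrite /= addrC addKr.
have hT j : (m < j)%N -> TT j.-1 <= TT j.
  case: j => // i mi; have i1 : (1 <= i)%N by exact: leq_trans m1 mi.
  by have [r [-> r0 rb _]] := step i i1; rewrite /= lerDl.
have hG j : (m < j)%N -> G j <= G j.-1.
  case: j => // i mi; have i1 : (1 <= i)%N by exact: leq_trans m1 mi.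
  by have [r [_ _ _ ->]] := step i i1.
have hL M : \sum_(1 <= n < M) n%:R * tau n * G n <= fine Sum.
  rewrite -lee_fin -sumEFin (fineK Sumf).
  have -> : (\sum_(1 <= n < M) (n%:R * tau n * G n)%:E = \sum_(1 <= n < M) ((n%:R * tau n)%:E * P (A n)))%E.
    by apply: eq_bigr => n _; rewrite PAE EFinM.
  apply: nneseries_lim_ge => n n1 _; apply: mule_ge0; last exact: measure_ge0.
  by rewrite lee_fin mulr_ge0 ?tau_ge0.
have H1' n M : (m <= n)%N -> a n `^ (2 * theta) / n%:R `^ (theta - 1) *
      \sum_(n <= k < M) (k%:R `^ theta * tau k / a k `^ (2 * theta)) <= C * Ssum tau n.
  move=> mn.
  have Nn : (N <= n)%N by exact: leq_trans (leq_maxl N n0) mn.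
  have n1 : (1 <= n)%N by exact: leq_trans m1 mn.
  rewrite -lee_fin EFinM -sumEFin; apply: le_trans (H1 n Nn).
  apply: lee_wpmul2l; first by rewrite lee_fin divr_ge0 ?powR_ge0.
  apply: nneseries_lim_ge => k nk _; rewrite lee_fin divr_ge0 ?powR_ge0 //.
  by rewrite mulr_ge0 ?powR_ge0 ?tau_ge0 // (leq_trans n1 nk).
have H2' n k : (m <= n)%N -> (n <= k)%N -> c <= a k ^+ 2 / (k%:R * a n ^+ 2) * Ssum tau n.
  move=> mn nk; apply: hc nk; exact: leq_trans (leq_maxr N n0) mn.
have [B hB] := @core R tau a TT G theta C eps c (fine Sum) m m1 eps0 theta_ge1 c0 (ltW C_gt0) tau_ge0 a_gt0 TT0 G0 hTG hT hG hL H1' H2'.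

apply: (@le_lt_trans _ _ B%:E); last exact: ltry.
apply: lime_le.
  apply: is_cvg_nneseries => n n1 _.
  by rewrite lee_fin mulr_ge0 ?tau_ge0 ?exp_neg_div_ge0.
by apply: nearW => M; rewrite sumEFin lee_fin; exact: hB.
Qed.
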